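(* Let $A$ be a Frobenius algebra of dimension $n$ over a field $\mathbb{k}$ with bilinear form $B$ and Nakayama automorphism $\nu$. Let $\{e_1,\dots,e_n\}$ be a basis of $A$ and $\{e_1^\#,\dots,e_n^\#\}$ the dual basis with $B(e_i^\#,e_j)=\delta_{ij}$, and let $\Delta\in\mathcal{E}_A$ be the Frobenius coproduct $\Delta(x)=\sum_{i=1}^n xe_i\otimes e_i^\#$. Let $M=A\star\Delta=\{a\star\Delta: a\in A\}\subseteq\mathcal{E}_A$ be the left $A$-submodule generated by $\Delta$. Then $\dim_{\mathbb{k}}M=n$.
   Context: A Frobenius algebra over a field $\mathbb{k}$ is a finite-dimensional associative unital $\mathbb{k}$-algebra $A$ with a nondegenerate bilinear form $B:A\times A\to\mathbb{k}$ with $B(ab,c)=B(a,bc)$. Its Nakayama automorphism is the algebra automorphism $\nu:A\to A$ with $B(x,y)=B(y,\nu(x))$ for all $x,y\in A$. The Frobenius space $\mathcal{E}_A$ is the $\mathbb{k}$-vector space of all $\mathbb{k}$-linear maps $\Delta:A\to A\otimes_{\mathbb{k}} A$ that are $A$-bimodule homomorphisms, where $A\otimes A$ has bimodule structure $a(x\otimes y)b=ax\otimes yb$; such a $\Delta$ is determined by $\Delta(1_A)$ via $\Delta(x)=(x\otimes 1)\Delta(1_A)$. The left $A$-module structure $\star$ on $\mathcal{E}_A$ is defined by $(a\star\Delta)(1_A)=(1\otimes\nu^{-1}(a))\Delta(1_A)$, i.e. if $\Delta(1_A)=\sum_j x_j\otimes y_j$ then $a\star\Delta$ is the element of $\mathcal{E}_A$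 with $(a\star\Delta)(1_A)=\sum_j x_j\otimes\nu^{-1}(a)y_j$. *)

(* Defs.v *)
From HB Require Import structures.
From mathcomp Require Import all_boot all_order all_algebra.
From mathcomp Require Import falgebra.
Set Implicit Arguments. Unset Strict Implicit. Unset Printing Implicit Defensive.
Import Order.TTheory GRing.Theory Num.Theory.
Local Open Scope ring_scope.

(* A is modelled as an falgType over a field K (finite-dimensional unital   *)
(* associative K-algebra).  The tensor product A (x) A is modelled as the    *)
(* space of \dim A x \dim A matrices of coordinates with respect to the      *)
(* canonical basis [vbasis {:A}]:  t = \sum_(i,j) t i j  b_i (x) b_j.        *)

Section Tensor.
Variables (K : fieldType) (A : falgType K).

Definition tbasis : (\dim {:A}).-tuple A := vbasis {:A}.

Definition tensor := 'M[K]_(\dim {:A}).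

Definition tens (x y : A) : tensor :=
  \matrix_(i, j) (coord tbasis i x * coord tbasis j y).

(* multiplication in the algebra A (x) A : (a (x) b)(c (x) d) = ac (x) bd,   *)
(* extended bilinearly *)
Definition tmul (s t : tensor) : tensor :=
  \sum_i \sum_j \sum_k \sum_l
     (s i j * t k l) *: tens (tbasis`_i * tbasis`_k) (tbasis`_j * tbasis`_l).

(* The left A-module structure on the Frobenius space:                      *)
(* (a * D)(1) = (1 (x) nuinv a) D(1), and (a * D)(x) = (x (x) 1) (a * D)(1). *)
Definition star (nuinv : A -> A) (a : A) (D : A -> tensor) : A -> tensor :=
  fun x => tmul (tens x 1) (tmul (tens 1 (nuinv a)) (D 1)).

Definition frob_coprod n (e ed : n.-tuple A) : A -> tensor :=
  fun x => \sum_(i < n) tens (x * e`_i) ed`_i.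

End Tensor.

(* Main.v *)
Require Import Defs.
From HB Require Import structures.
From mathcomp Require Import all_boot all_order all_algebra.
From mathcomp Require Import falgebra.
From mathcomp Require Import ring.
Set Implicit Arguments. Unset Strict Implicit. Unset Printing Implicit Defensive.
Import GRing.Theory.
Local Open Scope ring_scope.

Section Aux.
Variables (K : fieldType) (A : falgType K).
Local Notation b := (@tbasis K A).
Local Notation T := (tensor A).

Lemma tensDl (c : K) (x y z : A) : tens (c *: x + y) z = c *: tens x z + tens y z.
Proof. by apply/matrixP=> i j; rewrite !mxE linearP /= mulrDl mulrA. Qed.
Lemma tensDr (c : K) (x y z : A) : tens z (c *: x + y) = c *: tens z x + tens z y.
Proof. by apply/matrixP=> i j; rewrite !mxE linearP /= mulrDr mulrCA. Qed.
Lemma tens0l (z : A) : tens 0 z = 0 :> T.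
Proof. by apply/matrixP=> i j; rewrite !mxE linear0 mul0r. Qed.
Lemma tens0r (z : A) : tens z 0 = 0 :> T.
Proof. by apply/matrixP=> i j; rewrite !mxE linear0 mulr0. Qed.
Lemma tens_suml (I : Type) (r : seq I) (P : pred I) (F : I -> A) (y : A) :
  tens (\sum_(i <- r | P i) F i) y = \sum_(i <- r | P i) tens (F i) y.
Proof.
have hD : {morph (fun x : A => tens x y) : a c / a + c}.
  by move=> a c; rewrite -[a]scale1r tensDl !scale1r.
exact: (big_morph _ hD (tens0l y)).
Qed.
Lemma tens_sumr (I : Type) (r : seq I) (P : pred I) (F : I -> A) (y : A) :
  tens y (\sum_(i <- r | P i) F i) = \sum_(i <- r | P i) tens y (F i).
Proof.
have hD : {morph (fun x : A => tens y x) : a c / a + c}.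
  by move=> a c; rewrite -[a]scale1r tensDr !scale1r.
exact: (big_morph _ hD (tens0r y)).
Qed.

Lemma tmulDr (s t1 t2 : T) : tmul s (t1 + t2) = tmul s t1 + tmul s t2 :> T.
Proof.
rewrite /tmul -!big_split /=; apply: eq_bigr => i _.
rewrite -!big_split /=; apply: eq_bigr => j _.
rewrite -!big_split /=; apply: eq_bigr => k _.
rewrite -!big_split /=; apply: eq_bigr => l _.
by rewrite !mxE mulrDr scalerDl.
Qed.
Lemma tmul0r (s : T) : tmul s 0 = 0 :> T.
Proof.
rewrite /tmul big1 // => i _; rewrite big1 // => j _; rewrite big1 // => k _.
by rewrite big1 // => l _; rewrite mxE mulr0 scale0r.
Qed.
Lemma tmul_sumr (I : Type) (r : seq I) (P : pred I) (F : I -> T) (s : T) :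
  tmul s (\sum_(i <- r | P i) F i) = \sum_(i <- r | P i) tmul s (F i).
Proof.
have hD : {morph (fun x : T => tmul s x) : a c / a + c}.
  by move=> a c; rewrite tmulDr.
exact: (big_morph _ hD (tmul0r s)).
Qed.

Lemma expand (x : A) : x = \sum_i coord b i x *: b`_i.
Proof. exact: (coord_vbasis (memvf x)). Qed.

Lemma mul_expand (x z : A) :
  x * z = \sum_i \sum_k (coord b i x * coord b k z) *: (b`_i * b`_k).
Proof.
rewrite {1}(expand x) {1}(expand z) mulr_suml; apply: eq_bigr => i _.
rewrite mulr_sumr; apply: eq_bigr => k _.
by rewrite -scalerAl -scalerAr scalerA.
Qed.

Lemma tmul_tens (x y z w : A) : tmul (tens x y) (tens z w) = tens (x * z) (y * w).
Proof.
apply/matrixP=> p q.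
rewrite [RHS]mxE (mul_expand x z) (mul_expand y w).
rewrite !linear_sum /=.
rewrite big_distrl /=.
rewrite /tmul !summxE; apply: eq_bigr => i _.
rewrite summxE linear_sum /= big_distrlr /=.
rewrite exchange_big /=; apply: eq_bigr => j _.
rewrite summxE; apply: eq_bigr => k _.
rewrite linear_sum /= big_distrr /= summxE; apply: eq_bigr => l _.
rewrite !mxE !linearZ /=. ring.
Qed.

Section Frob.
Variables (n : nat) (e ed : n.-tuple A).

Definition F (c : A) : A -> T := fun x => \sum_(i < n) tens (x * e`_i) (c * ed`_i).

Lemma F_lin c : linear (F c).
Proof.
move=> k x y; rewrite /F scaler_sumr -big_split; apply: eq_bigr => i _.
by rewrite mulrDl -scalerAl tensDl.
Qed.

HB.instance Definition _ c := GRing.isLinear.Build K A T *:%R (F c) (F_lin c).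

Lemma F_linc (k : K) (c d x : A) : F (k *: c + d) x = k *: F c x + F d x.
Proof.
rewrite /F scaler_sumr -big_split; apply: eq_bigr => i _.
by rewrite mulrDl -scalerAl tensDr.
Qed.

Lemma F0 x : F 0 x = 0.
Proof. by rewrite /F big1 // => i _; rewrite mul0r tens0r. Qed.

Lemma star_F nuinv a x : star nuinv a (frob_coprod e ed) x = F (nuinv a) x.
Proof.
rewrite /star /frob_coprod (tmul_sumr _ _ _ (tens 1 (nuinv a))) tmul_sumr; apply: eq_bigr => i _.
by rewrite !tmul_tens !mul1r.
Qed.

Definition ctr (B : A -> A -> K) (t : T) : A :=
  \sum_p \sum_q (t p q * B b`_q 1) *: b`_p.

Lemma ctrD B s t : ctr B (s + t) = ctr B s + ctr B t.
Proof.
rewrite /ctr -big_split; apply: eq_bigr => p _.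
rewrite -big_split; apply: eq_bigr => q _.
by rewrite mxE mulrDl scalerDl.
Qed.
Lemma ctr0 B : ctr B 0 = 0.
Proof.
by rewrite /ctr big1 // => p _; rewrite big1 // => q _; rewrite mxE mul0r scale0r.
Qed.
Lemma ctr_sum B (I : Type) (r : seq I) (P : pred I) (G : I -> T) :
  ctr B (\sum_(i <- r | P i) G i) = \sum_(i <- r | P i) ctr B (G i).
Proof.
have hD : {morph (ctr B) : a c / a + c} by move=> a c; rewrite ctrD.
exact: (big_morph _ hD (ctr0 B)).
Qed.

Lemma ctr_tens (B : A -> A -> K)
  (B_linl : forall (c : K) (x y z : A), B (c *: x + y) z = c * B x z + B y z)
  (x y : A) : ctr B (tens x y) = B y 1 *: x.
Proof.
have B0 : B 0 1 = 0.
  have h := B_linl 1 0 0 1; rewrite scale1r addr0 mul1r in h.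
  by apply: (addrI (B 0 1)); rewrite addr0 -h.
have hD : {morph (fun v => B v 1) : a c / a + c}.
  by move=> a c; rewrite -[a]scale1r B_linl scale1r mul1r.
rewrite /ctr [in RHS](expand x) scaler_sumr; apply: eq_bigr => p _.
rewrite -scaler_suml scalerA; congr (_ *: _).
rewrite [in RHS](expand y). rewrite (big_morph _ hD B0) mulr_suml; apply: eq_bigr => q _.
by rewrite mxE -[_ *: _]addr0 B_linl B0 addr0; ring.
Qed.

End Frob.
End Aux.

Theorem proposition7 (K : fieldType) (A : falgType K)
  (B : A -> A -> K)
  (B_linl : forall (c : K) (x y z : A), B (c *: x + y) z = c * B x z + B y z)
  (B_linr : forall (c : K) (x y z : A), B x (c *: y + z) = c * B x y + B x z)
  (B_assoc : forall a b c : A, B (a * b) c = B a (b * c))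
  (B_ndegl : forall x : A, (forall y : A, B x y = 0) -> x = 0)
  (B_ndegr : forall y : A, (forall x : A, B x y = 0) -> y = 0)
  (nu nuinv : A -> A)
  (nu_lin : forall (c : K) (x y : A), nu (c *: x + y) = c *: nu x + nu y)
  (nu1 : nu 1 = 1)
  (nuM : forall x y : A, nu (x * y) = nu x * nu y)
  (nuK : cancel nu nuinv) (nuinvK : cancel nuinv nu)
  (nu_nakayama : forall x y : A, B x y = B y (nu x))
  (n : nat) (e ed : n.-tuple A)
  (e_basis : basis_of fullv e)
  (ed_dual : forall i j : 'I_n, B ed`_i e`_j = (i == j)%:R) :
  exists M : {vspace 'Hom(A, tensor A)},
    (forall f : 'Hom(A, tensor A),
       f \in M <-> exists a : A, forall x : A, f x = star nuinv a (frob_coprod e ed) x)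
    /\ \dim M = n.
Proof.
pose Phi := fun a : A => (linfun (F e ed (nuinv a)) : 'Hom(A, tensor A)).
have nuinvL : forall (k : K) a b, nuinv (k *: a + b) = k *: nuinv a + nuinv b.
  by move=> k a b; apply: (can_inj nuK); rewrite nu_lin !nuinvK.
have PhiE : forall a x, Phi a x = F e ed (nuinv a) x by move=> a x; rewrite lfunE.
have PhiL : forall k a b, Phi (k *: a + b) = k *: Phi a + Phi b.
  move=> k a b; apply/lfunP => x.
  by rewrite add_lfunE scale_lfunE !PhiE nuinvL F_linc.
have nu0 : nu 0 = 0.
  have h := nu_lin 1 0 0; rewrite !scale1r addr0 in h.
  by apply: (addrI (nu 0)); rewrite addr0 -h.
have nuinv0 : nuinv 0 = 0 by rewrite -{1}nu0 nuK.
have Phi0 : Phi 0 = 0 by apply/lfunP => x; rewrite PhiE nuinv0 F0 zero_lfunE.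
have PhiZ : forall k a, Phi (k *: a) = k *: Phi a.
  by move=> k a; rewrite -[k *: a]addr0 PhiL Phi0 addr0.
have PhiS : forall k : 'I_n -> K, Phi (\sum_i k i *: e`_i) = \sum_i k i *: Phi e`_i.
  move=> k; have hD : {morph Phi : a c / a + c}.
    by move=> a c; rewrite -[a]scale1r PhiL !scale1r.
  by rewrite (big_morph _ hD Phi0); apply: eq_bigr => i _; exact: PhiZ.
have BR0 : forall z, B z 0 = 0.
  move=> z; have h := B_linr 1 z 0 0; rewrite scale1r addr0 mul1r in h.
  by apply: (addrI (B z 0)); rewrite addr0 -h.
have hDr : forall z, {morph B z : a c / a + c}.
  by move=> z a c; rewrite -[a]scale1r B_linr scale1r mul1r.
have key : forall a, ctr B (F e ed (nuinv a) 1) = a.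
  move=> a; rewrite /F ctr_sum.
  under eq_bigr do rewrite (ctr_tens B_linl) mul1r.
  have hB : forall i : 'I_n, B (nuinv a * ed`_i) 1 = B ed`_i a.
    move=> i; rewrite nu_nakayama nuM nuinvK -(B_assoc 1 a) mul1r.
    by rewrite [RHS]nu_nakayama.
  under eq_bigr do rewrite hB.
  have ha := coord_basis e_basis (memvf a).
  transitivity (\sum_i coord e i a *: e`_i); last by rewrite -ha.
  apply: eq_bigr => i _; congr (_ *: _).
  rewrite {1}ha (big_morph _ (hDr _) (BR0 _)) (bigD1 i) //= big1 => [|j ji].
    by rewrite -[_ *: e`_i]addr0 B_linr BR0 addr0 ed_dual eqxx mulr1 addr0.
  by rewrite -[_ *: e`_j]addr0 B_linr BR0 addr0 ed_dual eq_sym (negbTE ji) mulr0.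
have inj : forall a, Phi a = 0 -> a = 0.
  by move=> a h; rewrite -(key a) -PhiE h zero_lfunE ctr0.
have Xi : forall i : 'I_n, (map_tuple Phi e)`_i = Phi e`_i.
  by move=> i; rewrite (nth_map 0) // size_tuple.
have e_free := basis_free e_basis.
have Xfree : free (map_tuple Phi e).
  apply/freeP => k hk i.
  have h0 : Phi (\sum_i k i *: e`_i) = 0.
    by rewrite PhiS -[RHS]hk; apply: eq_bigr => j _; rewrite Xi.
  by move/freeP: e_free => ef; exact: ef k (inj _ h0) i.
exists <<map_tuple Phi e>>%VS; split.
  move=> f; split.
    move/coord_span => hf.
    exists (\sum_i coord (map_tuple Phi e) i f *: e`_i) => x.
    rewrite star_F -PhiE PhiS {1}hf !sum_lfunE; apply: eq_bigr => i _.
    by rewrite Xi.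
  move=> [a ha].
  have -> : f = Phi a by apply/lfunP => x; rewrite ha star_F PhiE.
  rewrite (coord_basis e_basis (memvf a)) PhiS.
  apply: rpred_sum => i _; apply: rpredZ; rewrite -Xi; apply: memv_span.
  by apply: mem_nth; rewrite size_tuple.
by move/eqP: Xfree ->; rewrite size_tuple.
Qed.
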